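(* For every $M$ with $\frac12\le M<\frac34$, every deterministic semi-online algorithm with migration factor $M$ for scheduling on two hierarchical machines with known optimal makespan (bin stretching) has competitive ratio at least $2-M$.
   Context: Model (two hierarchical machines with migration, bin stretching). Jobs $1,2,\dots,n$ arrive one by one ($n$ unknown in advance). Job $j$ has a size $p_j>0$ and a grade of service (GoS) $g_j\in\{1,2\}$; a job of GoS $1$ may only be processed on machine $m_1$, a job of GoS $2$ may be processed on $m_1$ or on $m_2$. The load of a machine is the total size of its jobs, the makespan is the maximum load. When job $j$ arrives, the algorithm must assign it, and may migrate previously arrived jobs (respecting GoS) of total size at most $M\cdot p_j$ (migration factor $M$). Bin stretching: the optimal offline makespan of the complete input is known in advance to the algorithm (scaled to $1$). The competitive ratio is the supremum over inputs of (algorithm's makespan)/(optimal makespan). *)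

(* Defs.v *)
From Stdlib Require Import Reals Lra List.
Open Scope R_scope.

Inductive machine := M1 | M2.

Definition machine_eqb (a b : machine) : bool :=
  match a, b with M1, M1 | M2, M2 => true | _, _ => false end.

(** Grade of service: GoS1 jobs only on M1, GoS2 jobs on M1 or M2. *)
Inductive gos := GoS1 | GoS2.

Record job := Job { size : R; grade : gos }.

(** An assignment of a job sequence: job number i (0-based) goes to machine a i. *)
Definition assignment := nat -> machine.

Fixpoint load (I : list job) (a : assignment) (m : machine) : R :=
  match I with
  | nil => 0
  | j :: I' => (if machine_eqb (a O) m then size j else 0)
               + load I' (fun i => a (S i)) m
  end.

Definition makespan (I : list job) (a : assignment) : R :=
  Rmax (load I a M1) (load I a M2).

Definition feasible (I : list job) (a : assignment) : Prop :=
  forall i j, nth_error I i = Some j -> grade j = GoS1 -> a i = M1.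

Definition opt_is (I : list job) (c : R) : Prop :=
  (exists a, feasible I a /\ makespan I a <= c) /\
  (forall a, feasible I a -> c <= makespan I a).

Definition valid_input (I : list job) : Prop :=
  (forall j, In j I -> 0 < size j) /\ opt_is I 1.

Fixpoint migration (I : list job) (a b : assignment) : R :=
  match I with
  | nil => 0
  | j :: I' => (if machine_eqb (a O) (b O) then 0 else size j)
               + migration I' (fun i => a (S i)) (fun i => b (S i))
  end.

(** A deterministic semi-online algorithm (knowing OPT = 1): the assignment
    it maintains after having seen the prefix s is A s. *)
Definition algorithm := list job -> assignment.

Definition valid_alg (Mf : R) (A : algorithm) : Prop :=
  forall p j q, valid_input (p ++ j :: q) ->
    feasible (p ++ j :: nil) (A (p ++ j :: nil)) /\
    migration p (A p) (A (p ++ j :: nil)) <= Mf * size j.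

(* Main.v *)
Require Import Defs.
From Stdlib Require Import Reals Lra List.
Open Scope R_scope.

Lemma rmax_l a b c : c <= a -> c <= Rmax a b.
Proof. intros; unfold Rmax; destruct (Rle_dec a b); lra. Qed.
Lemma rmax_r a b c : c <= b -> c <= Rmax a b.
Proof. intros; unfold Rmax; destruct (Rle_dec a b); lra. Qed.

Lemma valid3 (s0 s1 s2 : R) (g0 g1 g2 : gos) :
  0 < s0 -> 0 < s1 -> 0 < s2 ->
  (exists a, feasible (Job s0 g0 :: Job s1 g1 :: Job s2 g2 :: nil) a /\
     makespan (Job s0 g0 :: Job s1 g1 :: Job s2 g2 :: nil) a <= 1) ->
  (forall a, feasible (Job s0 g0 :: Job s1 g1 :: Job s2 g2 :: nil) a ->
     1 <= makespan (Job s0 g0 :: Job s1 g1 :: Job s2 g2 :: nil) a) ->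
  valid_input (Job s0 g0 :: Job s1 g1 :: Job s2 g2 :: nil).
Proof.
  intros h0 h1 h2 He Hl. split; [|split; assumption].
  intros j [<-|[<-|[<-|[]]]]; simpl; assumption.
Qed.

Theorem mainTheorem15 :
  forall (Mf : R), 1/2 <= Mf < 3/4 ->
  forall (A : algorithm), valid_alg Mf A ->
  forall eps : R, 0 < eps ->
  exists I : list job, valid_input I /\ 2 - Mf - eps <= makespan I (A I).
Proof.
  intros Mf HM A HA eps Heps.
  set (e := Rmin eps ((1 - Mf)/2)).
  assert (He1 : e <= eps) by apply Rmin_l.
  assert (He2 : e <= (1 - Mf)/2) by apply Rmin_r.
  assert (He0 : 0 < e) by (apply Rmin_glb_lt; lra).
  set (g := 1 - Mf - e). set (x := Mf + e).
  set (p := Job g GoS1 :: Job x GoS2 :: nil).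
  destruct (A p 1%nat) eqn:Hx.
  -
    set (I := Job g GoS1 :: Job x GoS2 :: Job (1 - g) GoS1 :: nil).
    assert (HV : valid_input I).
    { unfold I; apply valid3; try (unfold g, x; lra).
      - exists (fun i => match i with 1%nat => M2 | _ => M1 end). split.
        + intros i j Hn Hg. destruct i as [|[|[|i]]]; simpl in *; try reflexivity.
          inversion Hn; subst; simpl in Hg; discriminate.
        + unfold makespan; simpl. unfold Rmax; destruct Rle_dec; unfold g, x in *; lra.
      - intros a Hf. unfold makespan.
        assert (a0 : a 0%nat = M1) by (apply (Hf 0%nat (Job g GoS1)); reflexivity).
        assert (a2 : a 2%nat = M1) by (apply (Hf 2%nat (Job (1-g) GoS1)); reflexivity).
        apply rmax_l. simpl. rewrite a0, a2. simpl.
        destruct (a 1%nat); simpl; unfold x in *; lra. }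
    exists I. split; [exact HV|].
    destruct (HA p (Job (1 - g) GoS1) nil HV) as [Hf Hm].
    change (p ++ Job (1 - g) GoS1 :: nil) with I in Hf, Hm.
    assert (a0 : A I 0%nat = M1) by (apply (Hf 0%nat (Job g GoS1)); reflexivity).
    assert (a2 : A I 2%nat = M1) by (apply (Hf 2%nat (Job (1-g) GoS1)); reflexivity).
    assert (a1 : A I 1%nat = M1).
    { destruct (A I 1%nat) eqn:E; [reflexivity|].
      exfalso. unfold p in Hm, Hx. simpl in Hm. rewrite Hx, E in Hm. simpl in Hm.
      destruct (machine_eqb (A (Job g GoS1 :: Job x GoS2 :: nil) 0%nat) (A I 0%nat)).
      - unfold g, x in *; nra.
      - unfold g, x in *; nra. }
    unfold makespan. apply rmax_l. unfold I; simpl. fold I. rewrite a0, a1, a2. simpl.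
    unfold g, x in *; lra.
  -
    set (I := Job g GoS1 :: Job x GoS2 :: Job 1 GoS2 :: nil).
    assert (HV : valid_input I).
    { unfold I; apply valid3; try (unfold g, x; lra).
      - exists (fun i => match i with 2%nat => M2 | _ => M1 end). split.
        + intros i j Hn Hg. destruct i as [|[|[|i]]]; simpl in *; try reflexivity.
          inversion Hn; subst; simpl in Hg; discriminate.
        + unfold makespan; simpl. unfold Rmax; destruct Rle_dec; unfold g, x in *; lra.
      - intros a Hf. unfold makespan.
        assert (a0 : a 0%nat = M1) by (apply (Hf 0%nat (Job g GoS1)); reflexivity).
        simpl. rewrite a0. simpl.
        destruct (a 1%nat); destruct (a 2%nat); simpl;
          unfold Rmax; destruct Rle_dec; unfold g, x in *; lra. }
    exists I. split; [exact HV|].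
    destruct (HA p (Job 1 GoS2) nil HV) as [Hf Hm].
    change (p ++ Job 1 GoS2 :: nil) with I in Hf, Hm.
    assert (a0 : A I 0%nat = M1) by (apply (Hf 0%nat (Job g GoS1)); reflexivity).
    assert (a1 : A I 1%nat = M2).
    { destruct (A I 1%nat) eqn:E; [|reflexivity].
      exfalso. unfold p in Hm, Hx. simpl in Hm. rewrite Hx, E in Hm. simpl in Hm.
      destruct (machine_eqb (A (Job g GoS1 :: Job x GoS2 :: nil) 0%nat) (A I 0%nat)).
      - unfold g, x in *; nra.
      - unfold g, x in *; nra. }
    unfold makespan. unfold I; simpl. fold I. rewrite a0, a1. simpl.
    destruct (A I 2%nat); simpl.
    + apply rmax_l. unfold g, x in *; lra.
    + apply rmax_r. unfold g, x in *; lra.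
Qed.
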